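(* Let $\mathcal T\ge2$, $\mathcal S\ge\max\{2\mathcal T,6\}$, and $(t,x)\in\mathbb R\times\mathbb R^3$ with $|t-|x||\le1$ and $|x|\ge\max\{12,\mathcal T,2\mathcal S\}$. Then for $\sigma\in[0,1)$, $$\frac{1}{t+\mathcal T}\int_{|z|=t+\mathcal T}\frac{dS(z)}{|x+z|^{3-\sigma}}\le\frac{C}{|x|^{1-\sigma}},$$ with $C$ independent of $t$ and $x$.
   Context: $dS$ is the surface measure on the sphere $\{|z|=t+\mathcal T\}\subset\mathbb R^3$. *)

(* Defs.v *)
From Stdlib Require Import Reals.
From Coquelicot Require Import Coquelicot.
Open Scope R_scope.

Definition R3 := (R * R * R)%type.

Definition add3 (x z : R3) : R3 :=
  let '(x1, x2, x3) := x in let '(z1, z2, z3) := z in (x1 + z1, x2 + z2, x3 + z3).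

Definition norm3 (x : R3) : R :=
  let '(x1, x2, x3) := x in sqrt (x1 ^ 2 + x2 ^ 2 + x3 ^ 2).

Definition sph (r th ph : R) : R3 :=
  (r * sin th * cos ph, r * sin th * sin ph, r * cos th).

(* Surface integral  \int_{|z|=r} f(z) dS(z)  with respect to the surface
   measure of the sphere of radius r in R^3, written in spherical
   coordinates: dS = r^2 sin(th) dph dth, th in [0,pi], ph in [0,2pi]. *)
Definition sphere_integral (r : R) (f : R3 -> R) : R :=
  RInt (fun th => RInt (fun ph => f (sph r th ph) * (r ^ 2 * sin th)) 0 (2 * PI)) 0 PI.

(* Main.v *)
Require Import Defs.
From Stdlib Require Import Reals.
From Coquelicot Require Import Coquelicot.
From Stdlib Require Import Lra Psatz.
Open Scope R_scope.

Lemma sin_approx1 (y:R) : sin_approx y 1 = y - y^3/6.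
Proof. unfold sin_approx, sin_term. simpl. field. Qed.
Lemma sin_approx2 (y:R) : sin_approx y 2 = y - y^3/6 + y^5/120.
Proof. unfold sin_approx, sin_term. simpl. field. Qed.

Lemma sin_lo_pos (y : R) : 0 <= y <= PI/2 -> y/3 <= sin y.
Proof.
  intros [H0 H1]. pose proof PI_4 as HP4.
  destruct (sin_bound y 0 H0 ltac:(lra)) as [H _].
  replace (2*0+1)%nat with 1%nat in H by reflexivity.
  rewrite sin_approx1 in H. nra.
Qed.

Lemma sin_hi_pos (y : R) : 0 <= y <= PI -> sin y <= y.
Proof.
  intros [H0 H1]. pose proof PI_4 as HP4.
  destruct (sin_bound y 0 H0 H1) as [_ H].
  replace (2*(0+1))%nat with 2%nat in H by reflexivity.
  rewrite sin_approx2 in H.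
  assert (y^2 <= 16) by nra.
  assert (y^5/120 <= y^3/6).
  { replace (y^5) with (y^3*y^2) by ring. assert (0 <= y^3) by (apply pow_le; lra). nra. }
  lra.
Qed.

Lemma sin_lo (y : R) : Rabs y <= PI/2 -> Rabs y / 3 <= Rabs (sin y).
Proof.
  intros H. pose proof PI_RGT_0.
  destruct (Rle_or_lt 0 y) as [Hy|Hy].
  - rewrite Rabs_right in H |- * by lra.
    pose proof (sin_lo_pos y ltac:(lra)). rewrite Rabs_right; lra.
  - rewrite Rabs_left in H |- * by lra.
    pose proof (sin_lo_pos (-y) ltac:(lra)). rewrite sin_neg in H1.
    rewrite Rabs_left1; lra.
Qed.

Lemma sin_hi (y : R) : Rabs y <= PI -> Rabs (sin y) <= Rabs y.
Proof.
  intros H. pose proof PI_RGT_0.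
  destruct (Rle_or_lt 0 y) as [Hy|Hy].
  - rewrite (Rabs_right y) in H |- * by lra.
    pose proof (sin_hi_pos y ltac:(lra)). pose proof (sin_ge_0 y ltac:(lra) ltac:(lra)).
    rewrite Rabs_right; lra.
  - rewrite (Rabs_left y) in H |- * by lra.
    pose proof (sin_hi_pos (-y) ltac:(lra)). pose proof (sin_ge_0 (-y) ltac:(lra) ltac:(lra)).
    rewrite sin_neg in H1, H2. rewrite Rabs_left1; lra.
Qed.


Lemma sq_eq_nonneg (u v : R) : 0 <= u -> 0 <= v -> u^2 = v^2 -> u = v.
Proof. intros. nra. Qed.

Lemma div_bound (y a : R) : 0 < a -> -a <= y <= a -> -1 <= y/a <= 1.
Proof.
  intros Ha Hy. assert (E : y = (y/a)*a) by (field; lra).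
  split; apply (Rmult_le_reg_r a); try lra; rewrite <- E; lra.
Qed.

Lemma sqb (y a : R) : 0 < a -> y^2 <= a^2 -> -a <= y <= a.
Proof.
  intros Ha H. split; destruct (Rle_or_lt (-a) y); try lra; destruct (Rle_or_lt y a); try lra; nra.
Qed.

Lemma one_minus_sq (u v rho : R) : rho <> 0 -> rho^2 = u^2 + v^2 -> 1 - (u/rho)^2 = (v/rho)^2.
Proof. intros H E. assert (E2 : v^2 = rho^2 - u^2) by lra. unfold Rdiv. rewrite !Rpow_mult_distr, E2. field. auto. Qed.

Lemma geo_repr (x1 x2 x3 : R) : 0 < norm3 (x1,x2,x3) ->
  exists th0 ph0, 0 <= th0 <= PI /\ -PI <= ph0 <= PI /\
   x1 = - norm3 (x1,x2,x3) * sin th0 * cos ph0 /\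
   x2 = - norm3 (x1,x2,x3) * sin th0 * sin ph0 /\
   x3 = - norm3 (x1,x2,x3) * cos th0.
Proof.
  change (norm3 (x1,x2,x3)) with (sqrt (x1^2+x2^2+x3^2)). set (a := sqrt (x1^2+x2^2+x3^2)). intros Ha.
  assert (Ha2 : a^2 = x1^2+x2^2+x3^2) by (unfold a; rewrite pow2_sqrt; nra).
  pose proof PI_RGT_0 as HPI.
  assert (Hc : -1 <= -x3/a <= 1).
  { apply div_bound; [lra|]. assert ((-x3)^2 <= a^2) by nra. apply sqb; lra. }
  set (th0 := acos (-x3/a)).
  assert (Hth0 : 0 <= th0 <= PI) by apply acos_bound.
  assert (Hcth : cos th0 = -x3/a) by (apply cos_acos; auto).
  set (rho := sqrt (x1^2+x2^2)).
  assert (Hrho2 : rho^2 = x1^2+x2^2) by (unfold rho; rewrite pow2_sqrt; nra).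
  assert (Hrho0 : 0 <= rho) by apply sqrt_pos. clearbody rho a.
  assert (Hsth : a * sin th0 = rho).
  { apply sq_eq_nonneg.
    - apply Rmult_le_pos; [lra| apply sin_ge_0; lra].
    - lra.
    - rewrite Rpow_mult_distr. pose proof (sin2_cos2 th0) as E. unfold Rsqr in E.
      replace (sin th0 ^2) with (1 - cos th0 ^2) by (simpl; lra).
      rewrite Hcth. field_simplify; [|lra]. rewrite Ha2, Hrho2. field. }
  exists th0.
  destruct (Req_dec rho 0) as [Hr0|Hr0].
  - exists 0. rewrite cos_0, sin_0.
    assert (x1 = 0 /\ x2 = 0) as [E1 E2] by nra.
    repeat split; try lra.
    + rewrite Hcth. field. lra.
  - assert (Hrp : 0 < rho) by lra.
    assert (Hu : -1 <= -x1/rho <= 1).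
    { apply div_bound; [lra|]. assert ((-x1)^2 <= rho^2) by nra. apply sqb; lra. }
    set (p := acos (-x1/rho)).
    assert (Hp : 0 <= p <= PI) by apply acos_bound.
    assert (Hcp : cos p = -x1/rho) by (apply cos_acos; auto).
    assert (Hsp2 : sin p ^2 = (x2/rho)^2).
    { pose proof (sin2_cos2 p) as E. unfold Rsqr in E.
      replace (sin p ^2) with (1 - cos p ^2) by (simpl; lra).
      rewrite Hcp. apply one_minus_sq; [lra|]. rewrite Hrho2. ring. }
    assert (Hsp0 : 0 <= sin p) by (apply sin_ge_0; lra).
    destruct (Rle_or_lt x2 0) as [Hx2|Hx2].
    + exists p. assert (Hsp : sin p = -x2/rho).
      { apply sq_eq_nonneg; auto. unfold Rdiv. apply Rmult_le_pos; [lra|].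
        left; apply Rinv_0_lt_compat; lra. rewrite Hsp2. field. lra. }
      repeat split; try lra.
      * replace (- a * sin th0) with (-(a * sin th0)) by ring. rewrite Hsth, Hcp. field. lra.
      * replace (- a * sin th0) with (-(a * sin th0)) by ring. rewrite Hsth, Hsp. field. lra.
      * rewrite Hcth. field. lra.
    + exists (-p). rewrite cos_neg, sin_neg.
      assert (Hsp : sin p = x2/rho).
      { apply sq_eq_nonneg; auto. unfold Rdiv. apply Rmult_le_pos; [lra|].
        left; apply Rinv_0_lt_compat; lra. }
      repeat split; try lra.
      * replace (- a * sin th0) with (-(a * sin th0)) by ring. rewrite Hsth, Hcp. field. lra.
      * replace (- a * sin th0) with (-(a * sin th0)) by ring. rewrite Hsth, Hsp. field. lra.
      * rewrite Hcth. field. lra.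
Qed.

Lemma half_sq (y : R) : 4 * sin (y/2) ^ 2 = 2 - 2 * cos y.
Proof.
  replace y with (2 * (y/2)) at 2 by field. rewrite cos_2a_sin. simpl. ring.
Qed.

Lemma geo_ident (a th0 ph0 r th ph : R) :
  let x := (- a * sin th0 * cos ph0, - a * sin th0 * sin ph0, - a * cos th0) in
  norm3 (add3 x (sph r th ph)) ^ 2 =
   (r - a)^2 + 4*a*r*sin((th-th0)/2)^2 + 4*a*r*(sin th*sin th0)*sin((ph-ph0)/2)^2.
Proof.
  unfold norm3, add3, sph. cbv beta iota zeta. rewrite pow2_sqrt by (repeat apply Rplus_le_le_0_compat; apply pow2_ge_0).
  replace (4*a*r*sin((th-th0)/2)^2) with (a*r*(4*sin((th-th0)/2)^2)) by ring.
  replace (4*a*r*(sin th*sin th0)*sin((ph-ph0)/2)^2) with (a*r*(sin th*sin th0)*(4*sin((ph-ph0)/2)^2)) by ring.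
  rewrite !half_sq, !cos_minus.
  pose proof (sin2_cos2 th) as E1. pose proof (sin2_cos2 th0) as E2.
  pose proof (sin2_cos2 ph) as E3. pose proof (sin2_cos2 ph0) as E4. unfold Rsqr in *.
  set (s1 := sin th) in *. set (c1 := cos th) in *. set (s2 := sin th0) in *. set (c2 := cos th0) in *.
  set (s3 := sin ph) in *. set (c3 := cos ph) in *. set (s4 := sin ph0) in *. set (c4 := cos ph0) in *.
  transitivity ((r - a)^2 + a*r*(2 - 2*(c1*c2+s1*s2)) + a*r*(s1*s2)*(2-2*(c3*c4+s3*s4))
     + a^2*(s2*s2*(s4*s4+c4*c4-1) + (s2*s2+c2*c2-1)) + r^2*(s1*s1*(s3*s3+c3*c3-1) + (s1*s1+c1*c1-1))).
  - ring.
  - rewrite E1, E2, E3, E4. ring.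
Qed.


Lemma bump_int (A k ph1 : R) : 0 < A -> 0 < k ->
  ex_RInt (fun ph => /(A + k*(ph-ph1)^2)) 0 (2*PI) /\
  RInt (fun ph => /(A + k*(ph-ph1)^2)) 0 (2*PI) <= PI / (sqrt (k/A) * A).
Proof.
  intros HA Hk. set (l := sqrt (k/A)).
  assert (Hl : 0 < l) by (apply sqrt_lt_R0; apply Rdiv_lt_0_compat; lra).
  assert (Hl2 : l^2 = k/A) by (unfold l; rewrite pow2_sqrt; [reflexivity| apply Rlt_le, Rdiv_lt_0_compat; lra]).
  clearbody l.
  set (G := fun ph => atan (l*(ph-ph1)) / (l*A)).
  assert (HI : is_RInt (fun ph => /(A + k*(ph-ph1)^2)) 0 (2*PI) (minus (G (2*PI)) (G 0))).
  { apply (@is_RInt_derive R_CompleteNormedModule G).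
    - intros y _. unfold G. auto_derive; [easy|].
      assert (k = l^2*A) by (rewrite Hl2; field; lra). subst k.
      field. assert (0 <= (y-ph1)^2) by apply pow2_ge_0. repeat split; try lra; nra.
    - intros y _. apply (@ex_derive_continuous R_AbsRing R_NormedModule). auto_derive. assert (0 <= (y-ph1)^2) by apply pow2_ge_0. repeat split; try apply Rgt_not_eq; nra. }
  split; [eexists; eauto|].
  rewrite (is_RInt_unique _ _ _ _ HI). unfold G, minus, plus, opp. simpl.
  pose proof (atan_bound (l*(2*PI-ph1))). pose proof (atan_bound (l*(0-ph1))).
  assert (0 < l*A) by nra.
  replace (atan (l * (2 * PI - ph1)) / (l * A) + - (atan (l * (0 - ph1)) / (l * A))) with ((atan (l*(2*PI-ph1)) - atan (l*(0-ph1))) * /(l*A)) by (field; lra). unfold Rdiv. apply Rmult_le_compat_r; [left; apply Rinv_0_lt_compat; lra | lra].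
Qed.


Lemma sq_eq_nonneg' (u v : R) : 0 <= u -> 0 <= v -> u^2 = v^2 -> u = v.
Proof. intros. nra. Qed.

Lemma sin_sq_lo (y : R) : Rabs y <= PI/2 -> y^2/9 <= sin y ^2.
Proof.
  intros H. pose proof (sin_lo y H). pose proof (Rabs_pos y).
  rewrite <- (pow2_abs y), <- (pow2_abs (sin y)). nra.
Qed.

Lemma bump_pt (A B ph0 ph : R) : 0 < A -> 0 <= B -> -PI <= ph0 <= PI -> 0 <= ph <= 2*PI ->
  /(A + B * sin((ph-ph0)/2)^2) <= /(A + B/36*(ph-ph0)^2) + /(A + B/36*(ph-(ph0+2*PI))^2).
Proof.
  intros HA HB Hph0 Hph.
  assert (P1 : 0 < /(A + B/36*(ph-ph0)^2)).
  { apply Rinv_0_lt_compat. assert (0 <= (ph-ph0)^2) by apply pow2_ge_0. nra. }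
  assert (P2 : 0 < /(A + B/36*(ph-(ph0+2*PI))^2)).
  { apply Rinv_0_lt_compat. assert (0 <= (ph-(ph0+2*PI))^2) by apply pow2_ge_0. nra. }
  destruct (Rle_or_lt (ph - ph0) PI) as [Hc|Hc].
  - assert (Hs : ((ph-ph0)/2)^2/9 <= sin ((ph-ph0)/2)^2).
    { apply sin_sq_lo. apply Rabs_le. lra. }
    assert (/(A + B * sin((ph-ph0)/2)^2) <= /(A + B/36*(ph-ph0)^2)).
    { apply Rinv_le_contravar. assert (0 <= (ph-ph0)^2) by apply pow2_ge_0. nra.
      assert (B/36*(ph-ph0)^2 = B * (((ph-ph0)/2)^2/9)) by field. nra. }
    lra.
  - set (y := (ph - (ph0 + 2*PI))/2).
    assert (Hy : (ph-ph0)/2 = y + PI) by (unfold y; field).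
    rewrite Hy, neg_sin.
    assert (Hs : y^2/9 <= sin y^2).
    { apply sin_sq_lo. apply Rabs_le. unfold y. lra. }
    assert (/(A + B * (- sin y)^2) <= /(A + B/36*(ph-(ph0+2*PI))^2)).
    { apply Rinv_le_contravar. assert (0 <= (ph-(ph0+2*PI))^2) by apply pow2_ge_0. nra.
      assert (B/36*(ph-(ph0+2*PI))^2 = B * (y^2/9)) by (unfold y; field).
      replace ((- sin y)^2) with (sin y ^2) by ring. nra. }
    lra.
Qed.

Lemma J_bounds (A B ph0 : R) : 0 < A -> 0 <= B -> -PI <= ph0 <= PI ->
  ex_RInt (fun ph => /(A + B * sin((ph-ph0)/2)^2)) 0 (2*PI) /\
  RInt (fun ph => /(A + B * sin((ph-ph0)/2)^2)) 0 (2*PI) <= 2*PI/A /\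
  (0 < B -> RInt (fun ph => /(A + B * sin((ph-ph0)/2)^2)) 0 (2*PI) <= 12*PI/(sqrt A * sqrt B)).
Proof.
  intros HA HB Hph0. pose proof PI_RGT_0 as HPI.
  assert (Hex : ex_RInt (fun ph => /(A + B * sin((ph-ph0)/2)^2)) 0 (2*PI)).
  { apply (@ex_RInt_continuous R_CompleteNormedModule). intros z _.
    apply (@ex_derive_continuous R_AbsRing R_NormedModule). auto_derive.
    assert (0 <= sin ((z-ph0)/2)^2) by apply pow2_ge_0. apply Rgt_not_eq. nra. }
  split; [exact Hex|]. split.
  - eapply Rle_trans. apply (RInt_le _ (fun _ => /A)); try lra; auto.
    + apply ex_RInt_const.
    + intros ph _. apply Rinv_le_contravar; auto.
      assert (0 <= sin ((ph-ph0)/2)^2) by apply pow2_ge_0. nra.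
    + rewrite RInt_const. unfold scal; simpl. unfold mult; simpl. unfold Rdiv. lra.
  - intros HBp.
    assert (Hk : 0 < B/36) by lra.
    destruct (bump_int A (B/36) ph0 HA Hk) as [E1 I1].
    destruct (bump_int A (B/36) (ph0+2*PI) HA Hk) as [E2 I2].
    assert (Hsq : sqrt (B/36/A) * A = sqrt A * sqrt B / 6).
    { apply sq_eq_nonneg'.
      - apply Rmult_le_pos; [apply sqrt_pos| lra].
      - pose proof (sqrt_pos A). pose proof (sqrt_pos B). apply Rmult_le_pos; [|lra]. nra.
      - rewrite Rpow_mult_distr, pow2_sqrt.
        2:{ apply Rlt_le, Rdiv_lt_0_compat; lra. }
        unfold Rdiv. rewrite !Rpow_mult_distr, pow2_sqrt, pow2_sqrt by lra. field. lra. }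
    rewrite Hsq in I1, I2.
    eapply Rle_trans.
    apply (RInt_le _ (fun ph => plus (/(A + B/36*(ph-ph0)^2)) (/(A + B/36*(ph-(ph0+2*PI))^2)))); try lra; auto.
    + apply (@ex_RInt_plus R_NormedModule); auto.
    + intros ph Hph. apply bump_pt; lra.
    + rewrite (@RInt_plus R_CompleteNormedModule) by auto.
      assert (0 < sqrt A) by (apply sqrt_lt_R0; lra). assert (0 < sqrt B) by (apply sqrt_lt_R0; lra).
      replace (12*PI/(sqrt A*sqrt B)) with (PI/(sqrt A*sqrt B/6) + PI/(sqrt A*sqrt B/6)) by (field; lra).
      apply Rplus_le_compat; assumption.
Qed.


Lemma H_int (M c q th0 : R) : 0 <= M -> 0 < c -> 0 < q -> 0 <= th0 <= PI ->
  ex_RInt (fun th => M / ((1 + c*Rabs(th-th0)) * Rpower (1 + c*Rabs(th-th0)) q)) 0 PI /\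
  RInt (fun th => M / ((1 + c*Rabs(th-th0)) * Rpower (1 + c*Rabs(th-th0)) q)) 0 PI <= 2*M/(c*q).
Proof.
  intros HM Hc Hq Hth0. set (H := fun th => M / ((1 + c*Rabs(th-th0)) * Rpower (1 + c*Rabs(th-th0)) q)).
  set (d1 := fun th => M / ((1 + c*(th-th0)) * exp (q * ln (1 + c*(th-th0))))).
  set (d2 := fun th => M / ((1 + c*(th0-th)) * exp (q * ln (1 + c*(th0-th))))).
  set (G1 := fun th => - (M/(c*q)) / exp (q * ln (1 + c*(th-th0)))).
  set (G2 := fun th => (M/(c*q)) / exp (q * ln (1 + c*(th0-th)))).
  assert (I1 : is_RInt d1 th0 PI (minus (G1 PI) (G1 th0))).
  { apply (@is_RInt_derive R_CompleteNormedModule G1).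
    - intros y Hy. rewrite Rmin_left, Rmax_right in Hy by lra.
      unfold G1, d1. auto_derive.
      + repeat split; try nra. apply Rgt_not_eq, exp_pos.
      + try replace (y + - th0) with (y - th0) by ring; try replace (th0 + - y) with (th0 - y) by ring. field. repeat split; try nra; apply Rgt_not_eq, exp_pos.
    - intros y Hy. rewrite Rmin_left, Rmax_right in Hy by lra.
      apply (@ex_derive_continuous R_AbsRing R_NormedModule). unfold d1. auto_derive.
      repeat split; try nra. apply Rgt_not_eq. apply Rmult_lt_0_compat; [nra| apply exp_pos]. }
  assert (I2 : is_RInt d2 0 th0 (minus (G2 th0) (G2 0))).
  { apply (@is_RInt_derive R_CompleteNormedModule G2).
    - intros y Hy. rewrite Rmin_left, Rmax_right in Hy by lra.
      unfold G2, d2. auto_derive.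
      + repeat split; try nra. apply Rgt_not_eq, exp_pos.
      + try replace (y + - th0) with (y - th0) by ring; try replace (th0 + - y) with (th0 - y) by ring. field. repeat split; try nra; apply Rgt_not_eq, exp_pos.
    - intros y Hy. rewrite Rmin_left, Rmax_right in Hy by lra.
      apply (@ex_derive_continuous R_AbsRing R_NormedModule). unfold d2. auto_derive.
      repeat split; try nra. apply Rgt_not_eq. apply Rmult_lt_0_compat; [nra| apply exp_pos]. }
  assert (X1 : forall y, Rmin th0 PI < y < Rmax th0 PI -> d1 y = H y).
  { intros y Hy. rewrite Rmin_left, Rmax_right in Hy by lra. unfold d1, H, Rpower.
    rewrite Rabs_right by lra. reflexivity. }
  assert (X2 : forall y, Rmin 0 th0 < y < Rmax 0 th0 -> d2 y = H y).
  { intros y Hy. rewrite Rmin_left, Rmax_right in Hy by lra. unfold d2, H, Rpower.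
    rewrite Rabs_left by lra. replace (- (y - th0)) with (th0 - y) by ring. reflexivity. }
  assert (E1 : ex_RInt H th0 PI) by (apply (ex_RInt_ext d1); auto; eexists; eauto).
  assert (E2 : ex_RInt H 0 th0) by (apply (ex_RInt_ext d2); auto; eexists; eauto).
  split.
  - apply (ex_RInt_Chasles H 0 th0 PI); auto.
  - rewrite <- (RInt_Chasles H 0 th0 PI) by auto.
    rewrite <- (RInt_ext d1 H th0 PI X1), <- (RInt_ext d2 H 0 th0 X2).
    rewrite (is_RInt_unique _ _ _ _ I1), (is_RInt_unique _ _ _ _ I2).
    unfold G1, G2, minus, plus, opp; simpl.
    replace (th0 - th0) with 0 by ring. rewrite Rmult_0_r, Rplus_0_r, ln_1, Rmult_0_r, exp_0.
    assert (0 < / exp (q * ln (1 + c * (PI - th0)))) by (apply Rinv_0_lt_compat, exp_pos).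
    assert (0 < / exp (q * ln (1 + c * (th0 - 0)))) by (apply Rinv_0_lt_compat, exp_pos).
    assert (0 <= M/(c*q)) by (apply Rdiv_le_0_compat; nra).
    unfold Rdiv in *. 
    replace (2 * M * / (c * q)) with (M * / (c*q) + M * / (c*q)) by ring.
    rewrite !Rinv_1, !Rmult_1_r. nra.
Qed.


Lemma cont2_1d_u (f : R -> R -> R) (u v : R) : continuity_2d_pt f u v -> continuous (fun u' => f u' v) u.
Proof.
  intros H. apply continuity_pt_filterlim.
  intros eps Heps. destruct (H (mkposreal eps Heps)) as [d Hd].
  exists d. split; [apply cond_pos|]. intros z [_ Hz]. simpl in *. unfold R_dist in *.
  apply Hd; auto. rewrite Rminus_diag, Rabs_R0. apply cond_pos.
Qed.

Lemma param_cont (f : R -> R -> R) (a b c : R) : a < b ->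
  (forall u v, continuity_2d_pt f u v) ->
  continuous (fun v => RInt (fun u => f u v) a b) c.
Proof.
  intros Hab Hf.
  assert (Hex : forall v, ex_RInt (fun u => f u v) a b).
  { intros v. apply (@ex_RInt_continuous R_CompleteNormedModule). intros z _. apply cont2_1d_u; auto. }
  apply continuity_pt_filterlim.
  intros eps Heps.
  assert (He' : 0 < eps / (2*(b-a))) by (apply Rdiv_lt_0_compat; lra).
  destruct (uniform_continuity_2d_1d f a b c (fun x _ => Hf x c) (mkposreal _ He')) as [d Hd].
  exists d. split; [apply cond_pos|]. intros v [_ Hv]. simpl in *. unfold R_dist in *.
  rewrite <- (@RInt_minus R_CompleteNormedModule) by auto.
  apply Rle_lt_trans with ((b-a) * (eps/(2*(b-a)))).
  - apply abs_RInt_le_const; [lra| |].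
    + apply (@ex_RInt_minus R_NormedModule); auto.
    + intros t Ht. unfold minus, plus, opp; simpl. left.
      apply (Hd t c t v); try lra.
      * pose proof (cond_pos d). lra.
      * apply Rabs_lt_between' in Hv. lra.
      * rewrite Rminus_diag, Rabs_R0. apply cond_pos.
  - replace ((b-a) * (eps/(2*(b-a)))) with (eps/2) by (field; lra). lra.
Qed.


Lemma N_lb (x1 x2 x3 r th ph : R) : 0 <= r ->
  (r - norm3 (x1,x2,x3))^2 <= norm3 (add3 (x1,x2,x3) (sph r th ph))^2.
Proof.
  intros Hr. unfold norm3, add3, sph. cbv beta iota zeta.
  rewrite (pow2_sqrt ((x1 + _)^2 + _ + _)) by (repeat apply Rplus_le_le_0_compat; apply pow2_ge_0).
  set (a := sqrt (x1^2+x2^2+x3^2)).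
  assert (Ha2 : a^2 = x1^2+x2^2+x3^2) by (unfold a; rewrite pow2_sqrt; [reflexivity|repeat apply Rplus_le_le_0_compat; apply pow2_ge_0]).
  assert (Ha0 : 0 <= a) by apply sqrt_pos. clearbody a.
  set (z1 := r * sin th * cos ph). set (z2 := r * sin th * sin ph). set (z3 := r * cos th).
  assert (Hz : z1^2 + z2^2 + z3^2 = r^2).
  { unfold z1, z2, z3. pose proof (sin2_cos2 th). pose proof (sin2_cos2 ph). unfold Rsqr in *.
    transitivity (r^2 * (sin th * sin th * (sin ph * sin ph + cos ph * cos ph) + cos th * cos th)); [ring|].
    rewrite H0, Rmult_1_r, H. ring. }
  clearbody z1 z2 z3.
  assert (CS : (x1*z1+x2*z2+x3*z3)^2 <= (a*r)^2).
  { rewrite Rpow_mult_distr, Ha2, <- Hz.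
    assert (0 <= (x1*z2-x2*z1)^2 + (x1*z3-x3*z1)^2 + (x2*z3-x3*z2)^2) by
      (repeat apply Rplus_le_le_0_compat; apply pow2_ge_0).
    nra. }
  assert (- (a*r) <= x1*z1+x2*z2+x3*z3).
  { assert (0 <= a*r) by nra. nra. }
  nra.
Qed.

Lemma cont2_pow2 (f : R -> R -> R) x y : continuity_2d_pt f x y -> continuity_2d_pt (fun u v => f u v ^ 2) x y.
Proof.
  intros H. apply (continuity_2d_pt_ext (fun u v => f u v * (f u v * 1))); [intros; simpl; ring|].
  apply continuity_2d_pt_mult; auto. apply continuity_2d_pt_mult; auto. apply continuity_2d_pt_const.
Qed.

Lemma cont2_sinv x y : continuity_2d_pt (fun u v => sin v) x y.
Proof. apply (continuity_1d_2d_pt_comp sin (fun u v => v)). apply continuity_sin. apply continuity_2d_pt_id2. Qed.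
Lemma cont2_cosv x y : continuity_2d_pt (fun u v => cos v) x y.
Proof. apply (continuity_1d_2d_pt_comp cos (fun u v => v)). apply continuity_cos. apply continuity_2d_pt_id2. Qed.
Lemma cont2_sinu x y : continuity_2d_pt (fun u v => sin u) x y.
Proof. apply (continuity_1d_2d_pt_comp sin (fun u v => u)). apply continuity_sin. apply continuity_2d_pt_id1. Qed.
Lemma cont2_cosu x y : continuity_2d_pt (fun u v => cos u) x y.
Proof. apply (continuity_1d_2d_pt_comp cos (fun u v => u)). apply continuity_cos. apply continuity_2d_pt_id1. Qed.

Lemma F_cont2 (x1 x2 x3 r p : R) :
  (forall th ph, 0 < norm3 (add3 (x1,x2,x3) (sph r th ph))) ->
  forall u v, continuity_2d_pt (fun u v => / Rpower (norm3 (add3 (x1,x2,x3) (sph r v u))) p * (r^2 * sin v)) u v.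
Proof.
  intros Hpos u v.
  set (h := fun u v => (x1 + r*sin v*cos u)^2 + (x2 + r*sin v*sin u)^2 + (x3 + r*cos v)^2).
  apply (continuity_2d_pt_ext (fun u v => (fun t => / Rpower (sqrt t) p) (h u v) * (r^2 * sin v))).
  { intros; reflexivity. }
  apply continuity_2d_pt_mult.
  - apply (continuity_1d_2d_pt_comp (fun t => / Rpower (sqrt t) p) h).
    + assert (Hh : 0 < h u v).
      { specialize (Hpos v u). unfold norm3, add3, sph in Hpos. cbv beta iota zeta in Hpos.
        unfold h. rewrite <- sqrt_0 in Hpos. apply sqrt_lt_0_alt in Hpos. exact Hpos. }
      apply (proj2 (continuity_pt_filterlim _ _)). apply (@ex_derive_continuous R_AbsRing R_NormedModule (fun t => / Rpower (sqrt t) p) (h u v)).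
      unfold Rpower. auto_derive. repeat split; auto; try (apply sqrt_lt_R0; auto); try (apply Rgt_not_eq, exp_pos).
    + unfold h. repeat first [ apply cont2_pow2 | apply continuity_2d_pt_plus | apply continuity_2d_pt_mult
        | apply continuity_2d_pt_const | apply cont2_sinv | apply cont2_cosv | apply cont2_sinu | apply cont2_cosu ].
  - repeat first [ apply continuity_2d_pt_mult | apply continuity_2d_pt_const | apply cont2_sinv ].
Qed.


Lemma div_le_div (x y z w : R) : 0 < y -> 0 < w -> x*w <= z*y -> x/y <= z/w.
Proof.
  intros Hy Hw H. unfold Rdiv.
  apply (Rmult_le_reg_r (y*w)); [nra|].
  replace (x * /y * (y*w)) with (x*w) by (field; lra).
  replace (z * /w * (y*w)) with (z*y) by (field; lra). exact H.
Qed.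

Lemma Rpower_pos' (x y : R) : 0 < Rpower x y.
Proof. unfold Rpower. apply exp_pos. Qed.

Lemma pw_bound (N A q : R) : 0 < A -> A <= N^2 -> 0 <= q -> 0 < N ->
  / Rpower N (q+2) <= / Rpower (sqrt A) q * / N^2.
Proof.
  intros HA HAN Hq HN. rewrite <- Rinv_mult.
  apply Rinv_le_contravar.
  - apply Rmult_lt_0_compat; [apply Rpower_pos'| nra].
  - rewrite Rpower_plus. replace (Rpower N 2) with (Rpower N (INR 2)) by (f_equal; simpl; ring). rewrite Rpower_pow by auto.
    apply Rmult_le_compat_r; [apply pow2_ge_0|].
    apply Rle_Rpower_l; auto. split; [apply sqrt_lt_R0; auto|].
    rewrite <- (sqrt_pow2 N) by lra. apply sqrt_le_1_alt; auto.
Qed.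

Lemma rp_half (U q : R) : 0 < U -> 0 <= q <= 1 -> Rpower U q / 2 <= Rpower (U/2) q.
Proof.
  intros HU Hq.
  replace U with ((U/2)*2) at 1 by field.
  rewrite <- Rpower_mult_distr by lra.
  assert (Rpower 2 q <= 2).
  { rewrite <- (Rpower_1 2) at 2 by lra. apply Rle_Rpower; lra. }
  pose proof (Rpower_pos' (U/2) q). nra.
Qed.

Lemma rp_le_self (a q : R) : 1 <= a -> q <= 1 -> Rpower a q <= a.
Proof. intros. rewrite <- (Rpower_1 a) at 2 by lra. apply Rle_Rpower; lra. Qed.

Lemma sin_diff_le (th th0 : R) : 0 <= th <= PI -> 0 <= th0 <= PI -> sin th - sin th0 <= Rabs (th - th0).
Proof.
  intros H1 H2. rewrite form4.
  assert (Hs : Rabs (sin ((th - th0)/2)) <= Rabs ((th-th0)/2)).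
  { apply sin_hi. apply Rabs_le. lra. }
  replace (Rabs ((th-th0)/2)) with (Rabs (th-th0)/2) in Hs.
  2:{ unfold Rdiv. rewrite Rabs_mult, (Rabs_right (/2)) by lra. reflexivity. }
  pose proof (COS_bound ((th+th0)/2)).
  assert (2 * cos ((th + th0) / 2) * sin ((th - th0) / 2) <= Rabs (2 * cos ((th + th0) / 2) * sin ((th - th0) / 2))) by apply Rle_abs.
  rewrite !Rabs_mult, (Rabs_right 2) in H0 by lra.
  assert (Rabs (cos ((th + th0) / 2)) <= 1) by (apply Rabs_le; lra).
  pose proof (Rabs_pos (sin ((th - th0) / 2))). pose proof (Rabs_pos (cos ((th + th0) / 2))).
  nra.
Qed.


Lemma inner_bound (N : R -> R) (r a q th0 ph0 th : R) :
  0 < th < PI -> 0 <= th0 <= PI -> -PI <= ph0 <= PI -> 1 <= r - a -> 0 < a -> 0 < q <= 1 ->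
  (forall ph, N ph ^ 2 = (r-a)^2 + 4*a*r*sin((th-th0)/2)^2 + 4*a*r*(sin th*sin th0)*sin((ph-ph0)/2)^2) ->
  (forall ph, 0 < N ph) ->
  ex_RInt (fun ph => / Rpower (N ph) (q+2) * (r^2 * sin th)) 0 (2*PI) ->
  RInt (fun ph => / Rpower (N ph) (q+2) * (r^2 * sin th)) 0 (2*PI) <=
  (64*PI*r^2/sqrt(a*r)) / ((1 + sqrt(a*r)/3*Rabs(th-th0)) * Rpower (1 + sqrt(a*r)/3*Rabs(th-th0)) q).
Proof.
  intros Hth Hth0 Hph0 Hra Ha Hq HN HNp Hex.
  pose proof PI_RGT_0 as HPI.
  assert (Hr : 0 < r) by lra.
  set (s := sin((th-th0)/2)).
  set (A := (r-a)^2 + 4*a*r*s^2).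
  set (B := 4*a*r*(sin th*sin th0)).
  set (w := Rabs (th-th0)).
  set (c := sqrt(a*r)/3).
  set (U := 1 + c*w).
  set (Q := Rpower U q).
  set (P := Rpower (sqrt A) q).
  set (M := 64*PI*r^2/sqrt(a*r)).
  assert (Hsth : 0 < sin th) by (apply sin_gt_0; lra).
  assert (Hsth0 : 0 <= sin th0) by (apply sin_ge_0; lra).
  assert (Hw0 : 0 <= w) by apply Rabs_pos.
  assert (Hsar : 0 < sqrt (a*r)) by (apply sqrt_lt_R0; nra).
  assert (Hsar2 : sqrt(a*r)^2 = a*r) by (rewrite pow2_sqrt; nra).
  assert (Hc : 0 < c) by (unfold c; lra).
  assert (Hc2 : c^2 = a*r/9) by (unfold c; replace ((sqrt(a*r)/3)^2) with (sqrt(a*r)^2/9) by field; rewrite Hsar2; reflexivity).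
  assert (HU : 1 <= U) by (unfold U; nra).
  assert (F1 : w^2/36 <= s^2).
  { unfold s, w. rewrite pow2_abs. pose proof (sin_sq_lo ((th-th0)/2) ltac:(apply Rabs_le; lra)) as H.
    replace (((th-th0)/2)^2) with ((th-th0)^2/4) in H by field. lra. }
  assert (F3 : U^2/4 <= A).
  { unfold A, U. assert (1 <= (r-a)^2) by nra.
    assert (c^2*w^2 <= 4*a*r*s^2) by (rewrite Hc2; nra).
    assert (0 <= (c*w-1)^2) by apply pow2_ge_0. nra. }
  assert (HA : 0 < A) by nra.
  assert (F4 : U/2 <= sqrt A).
  { rewrite <- (sqrt_pow2 (U/2)) by lra. apply sqrt_le_1_alt. nra. }
  assert (HQ : 0 < Q) by apply Rpower_pos'.
  assert (HP : 0 < P) by apply Rpower_pos'.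
  assert (F5 : Q/2 <= P).
  { eapply Rle_trans. apply rp_half; lra. apply Rle_Rpower_l; lra. }
  assert (HB : 0 <= B) by (unfold B; assert (0 <= sin th * sin th0) by nra; nra).
  destruct (J_bounds A B ph0 HA HB Hph0) as [HJex [HJ1 HJ2]].
  set (J := RInt (fun ph => /(A + B * sin((ph-ph0)/2)^2)) 0 (2*PI)) in *.
  set (K := r^2 * sin th * / P).
  assert (HK : 0 <= K) by (unfold K; apply Rmult_le_pos; [nra| left; apply Rinv_0_lt_compat; lra]).
  assert (Step1 : RInt (fun ph => / Rpower (N ph) (q+2) * (r^2 * sin th)) 0 (2*PI) <= K * J).
  { eapply Rle_trans.
    - apply (RInt_le _ (fun ph => K * / (A + B * sin((ph-ph0)/2)^2))); try lra; auto.
      + apply (@ex_RInt_scal R_NormedModule _ 0 (2*PI) K); auto.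
      + intros ph _. unfold K.
        assert (HE : N ph ^2 = A + B * sin((ph-ph0)/2)^2) by (rewrite HN; unfold A, B, s; ring).
        pose proof (pw_bound (N ph) A q HA ltac:(rewrite HE; assert (0 <= sin((ph-ph0)/2)^2) by apply pow2_ge_0; nra) ltac:(lra) (HNp ph)) as Hpw.
        rewrite HE in Hpw. fold P in Hpw.
        replace (r ^ 2 * sin th * / P * / (A + B * sin ((ph - ph0) / 2) ^ 2)) with
          ((/ P * / (A + B * sin ((ph - ph0) / 2) ^ 2)) * (r^2 * sin th)) by ring.
        apply Rmult_le_compat_r; [nra| exact Hpw].
    - right. apply (@RInt_scal R_CompleteNormedModule _ 0 (2*PI) K HJex). }
  eapply Rle_trans; [exact Step1|]. fold M U Q w c.
  destruct (Rle_or_lt (sin th) (4 * sin th0)) as [Cs|Cs].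
  -
    assert (HBp : 0 < B) by (unfold B; assert (0 < sin th0) by lra; assert (0 < a*r) by nra; apply Rmult_lt_0_compat; nra).
    specialize (HJ2 HBp).
    assert (HsqB : sqrt (a*r) * sin th <= sqrt B).
    { rewrite <- (sqrt_pow2 (sin th)) by lra. rewrite <- sqrt_mult_alt by nra.
      apply sqrt_le_1_alt. unfold B. assert (0 < a*r) by nra. assert (sin th * sin th <= sin th * (4*sin th0)) by (apply Rmult_le_compat_l; lra). simpl. nra. }
    assert (HsA : 0 < sqrt A) by (apply sqrt_lt_R0; lra).
    assert (HsB : 0 < sqrt B) by (apply sqrt_lt_R0; lra).
    eapply Rle_trans. apply Rmult_le_compat_l; [exact HK| exact HJ2].
    unfold K, M.
    replace (r ^ 2 * sin th * / P * (12 * PI / (sqrt A * sqrt B))) with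
      ((12*PI*r^2*sin th) / (P * sqrt A * sqrt B)) by (field; repeat split; apply Rgt_not_eq; lra).
    replace (64 * PI * r ^ 2 / sqrt (a * r) / (U * Q)) with ((64*PI*r^2) / (sqrt (a*r) * U * Q)) by (field; repeat split; apply Rgt_not_eq; lra).
    apply div_le_div.
    + apply Rmult_lt_0_compat; [nra| nra].
    + apply Rmult_lt_0_compat; nra.
    + assert (X1 : Q*U <= 4*(P*sqrt A)).
      { assert (Q/2 * (U/2) <= P * sqrt A) by (apply Rmult_le_compat; lra). lra. }
      assert (X2 : Q*U*(sqrt (a*r) * sin th) <= 4*(P*sqrt A) * sqrt B).
      { apply Rmult_le_compat; try lra. nra. nra. }
      assert (Y : 12*PI*r^2 * (Q*U*(sqrt(a*r)*sin th)) <= 12*PI*r^2 * (4*(P*sqrt A)*sqrt B)) by (apply Rmult_le_compat_l; nra).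
      assert (0 <= PI*r^2*(P*sqrt A*sqrt B)).
      { apply Rmult_le_pos; [nra|]. apply Rmult_le_pos; [|lra]. nra. }
      lra.
  -
    assert (Hsw : 3/4 * sin th <= w) by (pose proof (sin_diff_le th th0 ltac:(lra) Hth0); unfold w; lra).
    assert (Hcw : c * w <= U) by (unfold U; lra).
    eapply Rle_trans. apply Rmult_le_compat_l; [exact HK| exact HJ1].
    unfold K, M.
    replace (r ^ 2 * sin th * / P * (2 * PI / A)) with ((2*PI*r^2*sin th) / (P * A)) by (field; repeat split; apply Rgt_not_eq; lra).
    replace (64 * PI * r ^ 2 / sqrt (a * r) / (U * Q)) with ((64*PI*r^2) / (sqrt (a*r) * U * Q)) by (field; repeat split; apply Rgt_not_eq; lra).
    apply div_le_div.
    + apply Rmult_lt_0_compat; nra.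
    + apply Rmult_lt_0_compat; nra.
    + assert (X1 : Q*U^2 <= 8*(P*A)).
      { assert (Q/2 * (U^2/4) <= P * A) by (apply Rmult_le_compat; try lra; nra). lra. }
      assert (X2 : sin th * sqrt (a*r) <= 4 * U).
      { assert (sqrt (a*r) = 3*c) by (unfold c; field). nra. }
      assert (X3 : sin th * sqrt (a*r) * (U * Q) <= 4 * U * (U*Q)) by (apply Rmult_le_compat_r; nra).
      assert (Y : sin th * sqrt(a*r) * (U*Q) <= 32*(P*A)) by lra.
      assert (Z : 2*PI*r^2 * (sin th * sqrt(a*r) * (U*Q)) <= 2*PI*r^2*(32*(P*A))) by (apply Rmult_le_compat_l; nra).
      lra.
Qed.


Lemma norm3_nonneg (y : R3) : 0 <= norm3 y.
Proof. destruct y as [[y1 y2] y3]. apply sqrt_pos. Qed.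

Lemma geo (x1 x2 x3 : R) : 0 < norm3 (x1,x2,x3) ->
  exists th0 ph0, 0 <= th0 <= PI /\ -PI <= ph0 <= PI /\
  forall r th ph, norm3 (add3 (x1,x2,x3) (sph r th ph)) ^ 2 =
   (r - norm3 (x1,x2,x3))^2 + 4*norm3 (x1,x2,x3)*r*sin((th-th0)/2)^2
   + 4*norm3 (x1,x2,x3)*r*(sin th*sin th0)*sin((ph-ph0)/2)^2.
Proof.
  intros H. destruct (geo_repr x1 x2 x3 H) as (th0 & ph0 & H1 & H2 & E1 & E2 & E3).
  exists th0, ph0. split; [auto|split; [auto|]]. intros r th ph.
  set (a := norm3 (x1,x2,x3)) in *. clearbody a.
  rewrite E1, E2, E3 at 1. apply geo_ident.
Qed.

Theorem lemmaE6 (T S sigma : R) :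
  2 <= T -> Rmax (2 * T) 6 <= S -> 0 <= sigma < 1 ->
  exists C : R,
    forall (t : R) (x : R3),
      Rabs (t - norm3 x) <= 1 ->
      Rmax (Rmax 12 T) (2 * S) <= norm3 x ->
      / (t + T) *
        sphere_integral (t + T) (fun z => / Rpower (norm3 (add3 x z)) (3 - sigma))
      <= C / Rpower (norm3 x) (1 - sigma).
Proof.
  intros HT HS Hsig. exists (384*PI/(1-sigma)). intros t x Ht Hx.
  destruct x as [[x1 x2] x3].
  pose proof PI_RGT_0 as HPI.
  set (a := norm3 (x1,x2,x3)) in *.
  assert (Ha12 : 12 <= a) by (eapply Rle_trans; [|exact Hx]; eapply Rle_trans; [|apply Rmax_l]; apply Rmax_l).
  assert (HaT : T <= a) by (eapply Rle_trans; [|exact Hx]; eapply Rle_trans; [|apply Rmax_l]; apply Rmax_r).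
  apply Rabs_le_between' in Ht.
  set (r := t + T) in *.
  assert (Hra : 1 <= r - a) by (unfold r; lra).
  assert (Hr : 0 < r) by lra.
  assert (Ha : 0 < a) by lra.
  destruct (geo x1 x2 x3 Ha) as (th0 & ph0 & Hth0 & Hph0 & Hid).
  fold a in Hid.
  assert (Npos : forall th ph, 0 < norm3 (add3 (x1,x2,x3) (sph r th ph))).
  { intros th ph. pose proof (N_lb x1 x2 x3 r th ph ltac:(lra)). fold a in H.
    pose proof (norm3_nonneg (add3 (x1,x2,x3) (sph r th ph))).
    destruct H0; auto. rewrite <- H0 in H. simpl in H. nra. }
  set (q := 1 - sigma).
  assert (Hq : 0 < q <= 1) by (unfold q; lra).
  replace (3 - sigma) with (q + 2) by (unfold q; ring).
  unfold sphere_integral.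
  pose proof (F_cont2 x1 x2 x3 r (q+2) Npos) as Hf2.
  set (F := fun th ph => / Rpower (norm3 (add3 (x1,x2,x3) (sph r th ph))) (q+2) * (r^2 * sin th)).
  assert (HexF : forall th, ex_RInt (fun ph => F th ph) 0 (2*PI)).
  { intros th. apply (@ex_RInt_continuous R_CompleteNormedModule). intros z _.
    apply (cont2_1d_u (fun u v => F v u) z th). apply Hf2. }
  assert (HexI : ex_RInt (fun th => RInt (fun ph => F th ph) 0 (2*PI)) 0 PI).
  { apply (@ex_RInt_continuous R_CompleteNormedModule). intros z _.
    apply (param_cont (fun u v => F v u) 0 (2*PI) z); [lra|]. apply Hf2. }
  set (M := 64*PI*r^2/sqrt(a*r)).
  set (c := sqrt(a*r)/3).
  assert (Hsar : 0 < sqrt (a*r)) by (apply sqrt_lt_R0; nra).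
  assert (Hsar2 : sqrt(a*r)^2 = a*r) by (rewrite pow2_sqrt; nra).
  assert (HM : 0 <= M) by (unfold M; apply Rdiv_le_0_compat; nra).
  assert (Hc : 0 < c) by (unfold c; lra).
  destruct (H_int M c q th0 HM Hc ltac:(lra) Hth0) as [HexH HintH].
  assert (Hle : RInt (fun th => RInt (fun ph => F th ph) 0 (2*PI)) 0 PI <= 2*M/(c*q)).
  { eapply Rle_trans; [|exact HintH].
    apply RInt_le; [lra| exact HexI| exact HexH|].
    intros th Hth. unfold F, M, c.
    apply (inner_bound (fun ph => norm3 (add3 (x1,x2,x3) (sph r th ph))) r a q th0 ph0 th); auto; try lra.
    apply (HexF th). }
  change (RInt (fun th => RInt (fun ph => F th ph) 0 (2*PI)) 0 PI) with
    (RInt (fun th => RInt (fun ph => / Rpower (norm3 (add3 (x1,x2,x3) (sph r th ph))) (q+2) * (r^2 * sin th)) 0 (2*PI)) 0 PI) in Hle.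
  eapply Rle_trans. apply Rmult_le_compat_l; [left; apply Rinv_0_lt_compat; lra| exact Hle].
  assert (E : / r * (2*M/(c*q)) = 384*PI/(a*q)).
  { unfold M, c. replace (/ r * (2 * (64 * PI * r ^ 2 / sqrt (a * r)) / (sqrt (a * r) / 3 * q)))
      with (384*PI*r/(sqrt(a*r)^2*q)) by (field; repeat split; apply Rgt_not_eq; lra).
    rewrite Hsar2. field. repeat split; apply Rgt_not_eq; lra. }
  rewrite E. fold q.
  assert (Hp : Rpower a q <= a) by (apply rp_le_self; lra).
  assert (Hp0 : 0 < Rpower a q) by apply Rpower_pos'.
  apply div_le_div.
  - apply Rmult_lt_0_compat; lra.
  - exact Hp0.
  - replace (384*PI/q*(a*q)) with (384*PI*a) by (field; lra).
    apply Rmult_le_compat_l; lra.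
Qed.
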